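(* Let $\mathcal{A}$ be a Banach algebra such that $\mathrm{rad}(\mathcal{A})=\mathrm{rann}(\mathcal{A})$ and $\mathcal{A}/\mathrm{rad}(\mathcal{A})$ is commutative. Then the center $Z(\mathcal{A})$ is a closed ideal of $\mathcal{A}$.
   Context: $\mathrm{rad}(\mathcal{A})$ is the Jacobson radical and $\mathrm{rann}(\mathcal{A})=\{c\in\mathcal{A}: ac=0\ \forall a\in\mathcal{A}\}$. $Z(\mathcal{A})=\{z: za=az\ \forall a\in\mathcal{A}\}$. *)

(* Defs.v *)
From HB Require Import structures.
From mathcomp Require Import all_boot all_order all_algebra.
From mathcomp Require Import complex.
From mathcomp Require Import all_classical all_reals all_analysis.
Set Implicit Arguments. Unset Strict Implicit. Unset Printing Implicit Defensive.
Import Order.TTheory GRing.Theory Num.Theory.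
Import numFieldNormedType.Exports.
Local Open Scope ring_scope.
Local Open Scope classical_set_scope.

Definition is_banach_algebra (K : numFieldType) (A : completeNormedModType K)
    (mul : A -> A -> A) : Prop :=
  [/\ associative mul,
      (forall a b c, mul a (b + c) = mul a b + mul a c) /\
      (forall a b c, mul (a + b) c = mul a c + mul b c),
      (forall (k : K) a b, mul (k *: a) b = k *: mul a b),
      (forall (k : K) a b, mul a (k *: b) = k *: mul a b)
    & (forall a b, Num.norm (mul a b) <= Num.norm a * Num.norm b)].

(* a is left quasi-invertible: exists b with b o a = b + a - ba = 0. *)
Definition left_quasi_regular (K : numFieldType) (A : completeNormedModType K)
    (mul : A -> A -> A) (a : A) : Prop :=
  exists b : A, b + a - mul b a = 0.

Definition jacobson_rad (K : numFieldType) (A : completeNormedModType K)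
    (mul : A -> A -> A) : set A :=
  [set a | forall b, left_quasi_regular mul (mul b a)].

Definition rann (K : numFieldType) (A : completeNormedModType K)
    (mul : A -> A -> A) : set A :=
  [set c | forall a, mul a c = 0].

Definition alg_center (K : numFieldType) (A : completeNormedModType K)
    (mul : A -> A -> A) : set A :=
  [set z | forall a, mul z a = mul a z].

(* A / I is commutative (I an ideal): every commutator lies in I. *)
Definition quotient_commutative (K : numFieldType) (A : completeNormedModType K)
    (mul : A -> A -> A) (I : set A) : Prop :=
  forall a b, I (mul a b - mul b a).

Definition is_ideal (K : numFieldType) (A : completeNormedModType K)
    (mul : A -> A -> A) (I : set A) : Prop :=
  [/\ I 0,
      (forall x y, I x -> I y -> I (x + y)),
      (forall (k : K) x, I x -> I (k *: x)),
      (forall a x, I x -> I (mul a x))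
    & (forall a x, I x -> I (mul x a))].

Definition is_closed_ideal (K : numFieldType) (A : completeNormedModType K)
    (mul : A -> A -> A) (I : set A) : Prop :=
  closed I /\ is_ideal mul I.

(* Main.v *)
Require Import Defs.
From HB Require Import structures.
From mathcomp Require Import all_boot all_order all_algebra.
From mathcomp Require Import complex.
From mathcomp Require Import all_classical all_reals all_analysis.
Import Order.TTheory GRing.Theory Num.Theory.
Import numFieldNormedType.Exports.
Local Open Scope ring_scope.
Local Open Scope classical_set_scope.

Theorem lemma5p2 (R : realType) (A : completeNormedModType R[i])
    (mul : A -> A -> A) :
  is_banach_algebra mul ->
  jacobson_rad mul = rann mul ->
  quotient_commutative mul (jacobson_rad mul) ->
  is_closed_ideal mul (alg_center mul).
Proof.
move=> [massoc [mDr mDl] mZl mZr mN] radE qc.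
rewrite radE in qc.
have mNl : forall x a, mul (- x) a = - mul x a.
  by move=> x a; rewrite -scaleN1r mZl scaleN1r.
have mNr : forall x a, mul a (- x) = - mul a x.
  by move=> x a; rewrite -scaleN1r mZr scaleN1r.
have mBl : forall x y a, mul (x - y) a = mul x a - mul y a.
  by move=> x y a; rewrite mDl mNl.
have mBr : forall x y a, mul a (x - y) = mul a x - mul a y.
  by move=> x y a; rewrite mDr mNr.
have m0l : forall a, mul 0 a = 0.
  by move=> a; have := mZl 0 0 a; rewrite !scale0r.
have m0r : forall a, mul a 0 = 0.
  by move=> a; have := mZr 0 a 0; rewrite !scale0r.
split.
  pose G (a z : A) := mul z a - mul a z.
  have -> : alg_center mul = \bigcap_(a in setT) (G a @^-1` [set x | x = 0]).
    apply/seteqP; split=> z /=.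
      move=> Hz a _; rewrite /preimage /= /G; by rewrite Hz subrr.
    by move=> Hz a; apply/eqP; rewrite -subr_eq0; apply/eqP; apply: Hz.
  apply: closed_bigI => a _.
  apply: preimage_closed; last first.
    exact/accessible_closed_set1/hausdorff_accessible/norm_hausdorff.
  move=> x _.
  have Hb : forall t, `|G a x - G a t| <= (`|a| + `|a|) * `|x - t|.
    move=> t; have -> : G a x - G a t = mul (x - t) a - mul a (x - t).
      rewrite /G mBl mBr !opprB addrACA [RHS]addrACA; congr (_ + _).
      by rewrite addrC.
    apply: (le_trans (ler_normB _ _)).
    by rewrite mulrDl lerD // 1?mulrC // (le_trans (mN _ _)) // mulrC.
  apply/cvgrPdist_lt => e e0.
  have C0 : 0 < `|a| + `|a| + 1 by rewrite ltr_pwDr // addr_ge0.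
  have : \forall t \near x, `|x - t| < e / (`|a| + `|a| + 1).
    by apply: cvgr_dist_lt; [exact: cvg_id | rewrite divr_gt0].
  apply: filterS => t Ht.
  apply: (le_lt_trans (Hb t)).
  apply: (le_lt_trans (y := (`|a| + `|a| + 1) * `|x - t|)).
    by rewrite ler_wpM2r // lerDl.
  by rewrite mulrC -ltr_pdivlMr.
have key : forall z a : A, alg_center mul z -> alg_center mul (mul z a).
  move=> z a Hz b /=.
  have := qc a b z; rewrite mBr => /eqP; rewrite subr_eq0 => /eqP e.
  by rewrite -massoc e massoc Hz -massoc.
split.
- by move=> a /=; rewrite m0l m0r.
- by move=> x y Hx Hy a /=; rewrite mDl mDr Hx Hy.
- by move=> k x Hx a /=; rewrite mZl mZr Hx.
- by move=> a x Hx; rewrite -Hx; apply: key.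
- by move=> a x Hx; apply: key.
Qed.
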